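(* Let $\ell,k,t$ be positive integers, let $\mathbb{F}$ be a finite field, and let $b$ be an integer with $b>\ell/k$. There is a $t$-private $k$-server linear HSS for $\mathsf{CONCAT}_\ell(\mathbb{F})$ in which every output share lies in $\mathbb{F}^b$ (hence with download rate $\ell/(kb)$) if and only if there is an $\mathbb{F}$-linear code $C\subseteq(\mathbb{F}^b)^k$ with rate at least $\ell/(kb)$ and distance at least $t+1$. Moreover, in the ''if'' direction, the HSS can be taken to use $t$-private $k$-party CNF sharing as its $\mathsf{Share}$ function and to have upload cost $k\ell\binom{k-1}{t}\log_2|\mathbb{F}|$.
   Context: A $k$-server HSS for a class $\mathcal{F}$ of functions $f:\mathcal{X}^m\to\mathcal{Y}$ is a triple $(\mathsf{Share},\mathsf{Eval},\mathsf{Rec})$: the randomized $\mathsf{Share}$ maps $x\in\mathcal{X}$ to input shares $(x^{(1)},\dots,x^{(k)})$, each of the $m$ inputs being shared independently; server $j$ computes the output share $y^{(j)}=\mathsf{Eval}(f,j,(x_1^{(j)},\dots,x_m^{(j)}))$; and $\mathsf{Rec}(y^{(1)},\dots,y^{(k)})$ must equal $f(x_1,\dots,x_m)$ with probability 1. It is $t$-private if for every $T\subseteq[k]$ with $|T|\le t$ and all $x,x'\in\mathcal{X}$ the distribution of $(x^{(j)})_{j\in T}$ is the same under $\mathsf{Share}(x)$ and $\mathsf{Share}(x')$. For an object $w$ in a finite domain $\mathcal W$, $|w|=\log_2|\mathcal W|$. Upload cost $=\sum_{i,j}|x_i^{(j)}|$; download cost $=\sum_j|y^{(j)}|$; download rate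 $=\log_2|\mathcal{Y}|/\text{download cost}$. The HSS is linear (over $\mathbb{F}$) if $\mathcal{X}=\mathbb{F}$, $\mathsf{Share}(x,\mathbf{r})$ is $\mathbb{F}$-linear in $x$ and a uniformly random vector $\mathbf{r}$ over $\mathbb{F}$, $\mathcal{Y}=\mathbb{F}^{b'}$, each output share lies in some $\mathbb{F}^{b_j}$, and $\mathsf{Rec}$ is $\mathbb{F}$-linear ($\mathsf{Eval}$ need not be linear). $\mathsf{CONCAT}_\ell(\mathcal{X})$ is the class consisting of the single identity function $\mathcal{X}^\ell\to\mathcal{X}^\ell$, with $m=\ell$ inputs each shared independently. The $t$-private $k$-party CNF sharing of $x\in\mathbb{F}$: choose uniformly random $x_T\in\mathbb{F}$ for each $T\subseteq[k]$ with $|T|=t$ subject to $\sum_T x_T=x$; party $j$ gets $(x_T)_{T:j\notin T}$. An $\mathbb{F}$-linear code $C\subseteq(\mathbb{F}^b)^k$ is an $\mathbb{F}$-subspace; rate $\dim_{\mathbb{F}}C/(bk)$; distance $\min_{c\ne c'\in C}|\{i: c_i\ne c'_i\}|$. *)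

(* Defs.v *)
From HB Require Import structures.
From mathcomp Require Import all_boot all_order all_algebra.
Set Implicit Arguments. Unset Strict Implicit. Unset Printing Implicit Defensive.
Import Order.TTheory GRing.Theory Num.Theory.
Local Open Scope ring_scope.

(* i.e. the most general map that is jointly F-linear in (x, r).      *)
Record linShare (F : fieldType) (k : nat) := LinShare {
  sh_rho : nat;
  sh_s : 'I_k -> nat;
  sh_a : forall j : 'I_k, 'rV[F]_(sh_s j);
  sh_B : forall j : 'I_k, 'M[F]_(sh_rho, sh_s j)
}.

Definition share (F : fieldType) (k : nat) (S : linShare F k) (j : 'I_k)
  (x : F) (r : 'rV[F]_(sh_rho S)) : 'rV[F]_(sh_s S j) :=
  x *: sh_a S j + r *m sh_B S j.
Arguments share {F k} S j x r.
Arguments sh_rho {F k} l.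
Arguments sh_s {F k} l j.
Arguments sh_a {F k} l j.
Arguments sh_B {F k} l j.

(* t-privacy: for every set T of at most t servers and all x, x', the
   joint distribution of (share j x r)_{j in T}, r uniform, is the same.
   Since r is uniform on a finite set, this is equality of the number of
   r producing each possible tuple of values (v j)_{j in T}. *)
Definition t_private (F : finFieldType) (k : nat) (S : linShare F k) (t : nat) : Prop :=
  forall T : {set 'I_k}, (#|T| <= t)%N ->
  forall (x x' : F) (v : forall j : 'I_k, 'rV[F]_(sh_s S j)),
    #|[set r : 'rV[F]_(sh_rho S) | [forall j in T, share S j x r == v j]]| =
    #|[set r : 'rV[F]_(sh_rho S) | [forall j in T, share S j x' r == v j]]|.

(* Correctness for CONCAT_l(F): the l inputs are shared independently
   (independent randomness r i); server j applies an arbitrary Eval to its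
   l input shares, producing an output share in F^b; Rec is an arbitrary
   F-linear map (F^b)^k -> F^l, written y |-> sum_j y_j *m R_j.
   Correctness with probability 1 over finite uniform randomness means
   correctness for every choice of randomness. *)
Definition concat_correct (F : fieldType) (k l b : nat) (S : linShare F k)
  (Ev : forall j : 'I_k, ('I_l -> 'rV[F]_(sh_s S j)) -> 'rV[F]_b)
  (Rc : 'I_k -> 'M[F]_(b, l)) : Prop :=
  forall (x : 'I_l -> F) (r : 'I_l -> 'rV[F]_(sh_rho S)),
    \sum_(j < k) (Ev j (fun i => share S j (x i) (r i)) *m Rc j)
      = \row_(i < l) x i.

Definition linHSS_concat (F : finFieldType) (k t l b : nat) (S : linShare F k)
  (Ev : forall j : 'I_k, ('I_l -> 'rV[F]_(sh_s S j)) -> 'rV[F]_b)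
  (Rc : 'I_k -> 'M[F]_(b, l)) : Prop :=
  t_private S t /\ concat_correct Ev Rc.
Arguments linHSS_concat {F k} t {l b} S Ev Rc.

(* 2 ^ (upload cost): upload cost = sum_{i,j} |x_i^(j)| with
   |w| = log2 |W|, so 2^(upload cost) = prod_{i,j} |F^(s j)|. *)
Definition upload_size (F : finFieldType) (k : nat) (S : linShare F k) (l : nat) : nat :=
  (\prod_(i < l) \prod_(j < k) #|{: 'rV[F]_(sh_s S j)}|)%N.

Definition tsub (k t : nat) := {T : {set 'I_k} | #|T| == t}.

(* the set of t-subsets not containing j: party j's share coordinates *)
Definition cnf_part (k t : nat) (j : 'I_k) : {set tsub k t} :=
  [set T : tsub k t | j \notin val T].

(* Randomness r indexed by all t-subsets; x_T := r_T for T <> T0 and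
   x_T0 := x - sum_{T <> T0} r_T, where T0 is a fixed t-subset.  The
   resulting (x_T)_T is uniform subject to sum_T x_T = x (the coordinate
   r_T0 is simply unused). *)
Definition cnf_share (F : fieldType) (k t : nat) : linShare F k :=
  @LinShare F k #|{: tsub k t}| (fun j => #|cnf_part t j|)
    (fun j => \row_(i < #|cnf_part t j|)
        (if [pick T : tsub k t] == Some (enum_val i) then 1 else 0))
    (fun j => \matrix_(m < #|{: tsub k t}|, i < #|cnf_part t j|)
        (if [pick T : tsub k t] == Some (enum_val i)
         then (if [pick T : tsub k t] == Some (enum_val m) then 0 else -1)
         else ((enum_val m == enum_val i)%:R))).

(* F-linear codes C <= (F^b)^k, seen as subspaces of k x b matrices  *)
(* (row i = i-th symbol in F^b).                                      *)
Definition code_rate (F : fieldType) (k b : nat) (C : {vspace 'M[F]_(k, b)}) : rat :=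
  ((\dim C)%:R / (b * k)%:R)%R.

Definition code_dist_ge (F : fieldType) (k b : nat) (C : {vspace 'M[F]_(k, b)}) (d : nat) : Prop :=
  forall c c' : 'M[F]_(k, b), c \in C -> c' \in C -> c != c' ->
    (d <= #|[set i : 'I_k | row i c != row i c']|)%N.

(* Main.v *)
Require Import Defs.
From HB Require Import structures.
From mathcomp Require Import all_boot all_order all_algebra.
From Stdlib Require Import FunctionalExtensionality.
Set Implicit Arguments. Unset Strict Implicit. Unset Printing Implicit Defensive.
Import Order.TTheory GRing.Theory Num.Theory.
Local Open Scope ring_scope.

Definition cw (F : fieldType) (k l b : nat) (Rc : 'I_k -> 'M[F]_(b, l)) (z : 'rV[F]_l)
  : 'M[F]_(k, b) := \matrix_(j, p) \sum_i Rc j p i * z 0 i.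

Lemma cw_supp (F : finFieldType) (l k t b : nat) (S : linShare F k)
  (Ev : forall j : 'I_k, ('I_l -> 'rV[F]_(sh_s S j)) -> 'rV[F]_b)
  (Rc : 'I_k -> 'M[F]_(b, l)) :
  linHSS_concat t S Ev Rc -> forall z : 'rV[F]_l,
  (#|[set j | row j (cw Rc z) != 0%R]| <= t)%N -> z = 0.
Proof.
move=> [hpriv hcor] z hz.
set Sset := [set j | row j (cw Rc z) != 0] in hz.
have Rz0 : forall j, j \notin Sset -> Rc j *m z^T = 0.
  move=> j; rewrite inE negbK => /eqP /rowP hr.
  apply/matrixP => p q; rewrite ord1 !mxE.
  transitivity (row j (cw Rc z) 0 p); last by rewrite hr mxE.
  rewrite !mxE; apply: eq_bigr => i _; by rewrite mxE.
apply/rowP => i0; rewrite mxE.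
pose x' := fun i : 'I_l => ((i == i0)%:R : F).
pose A := fun i => [set r : 'rV[F]_(sh_rho S) | [forall j in Sset, share S j (x' i) r == share S j 0 0]].
pose r' := fun i => odflt 0 [pick r in A i].
have hr' : forall i j, j \in Sset -> share S j (x' i) (r' i) = share S j 0 0.
  move=> i j hj; rewrite /r'; case: pickP => [r /= |].
    by rewrite inE => /forallP /(_ j) /implyP /(_ hj) /eqP.
  move=> h0; exfalso.
  have : (0 < #|A i|)%N.
    rewrite /A (hpriv Sset hz (x' i) 0 (fun j => share S j 0 0)).
    apply/card_gt0P; exists 0; rewrite inE; apply/forallP => j'; exact/implyP.
  by rewrite card_gt0 => /set0Pn [r]; rewrite h0.
have E1 := hcor x' r'.
have E0 := hcor (fun _ => 0) (fun _ => 0).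
have : (\row_i x' i) *m z^T = (\row_(i < l) (0 : F)) *m z^T.
  rewrite -E1 -E0 !mulmx_suml; apply: eq_bigr => j _.
  case hj: (j \in Sset).
    congr (Ev j _ *m _ *m _); apply: functional_extensionality => i; exact: hr'.
  by rewrite -!mulmxA Rz0 ?hj // !mulmx0.
move/matrixP => /(_ 0 0); rewrite !mxE /x'.
rewrite (bigD1 i0) //= big1 => [|i hi]; last by rewrite !mxE (negbTE hi) mul0r.
rewrite big1 => [|i _]; last by rewrite !mxE mul0r.
by rewrite !mxE eqxx mul1r addr0.
Qed.

Lemma cw_lin (F : fieldType) (k l b : nat) (Rc : 'I_k -> 'M[F]_(b, l)) (kk : 'I_l -> F) :
  \sum_(i < l) kk i *: [tuple cw Rc (delta_mx 0 i) | i < l]`_i = cw Rc (\row_i kk i).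
Proof.
apply/matrixP => j p; rewrite summxE !mxE; apply: eq_bigr => i _.
rewrite (nth_mktuple _ 0) !mxE (bigD1 i) //= big1 => [|i' hi']; last first.
  rewrite !mxE eqxx andTb; case: (i' =P i) hi' => [->|_ _]; by rewrite ?eqxx ?mulr0.
by rewrite !mxE !eqxx mulr1 addr0 mulrC.
Qed.

Lemma hss_code (F : finFieldType) (l k t b : nat) (S : linShare F k)
  (Ev : forall j : 'I_k, ('I_l -> 'rV[F]_(sh_s S j)) -> 'rV[F]_b)
  (Rc : 'I_k -> 'M[F]_(b, l)) :
  linHSS_concat t S Ev Rc ->
   (exists C : {vspace 'M[F]_(k, b)},
       l%:R / (k * b)%:R <= code_rate C /\ code_dist_ge C t.+1).
Proof.
move=> H; have supp := cw_supp H.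
pose X := [tuple cw Rc (delta_mx 0 i) | i < l].
have fX : free X.
  apply/freeP => kk; rewrite cw_lin => h0.
  have := supp (\row_i kk i); rewrite h0.
  have -> : [set j | row j (0 : 'M[F]_(k, b)) != 0%R] = set0.
    by apply/setP => j; rewrite !inE row0 eqxx.
  rewrite cards0 => /(_ isT) /rowP hr i; by have := hr i; rewrite !mxE.
have dX : \dim <<X>> = l by move: fX; rewrite /free size_tuple => /eqP.
exists <<X>>%VS; split.
  by rewrite /code_rate dX mulnC.
move=> c c' hc hc' hne.
have hd : c - c' \in <<X>>%VS by rewrite memvB.
have := coord_span hd; rewrite cw_lin => hcw.
rewrite leqNgt; apply/negP => hlt.
have : (#|[set j | row j (cw Rc (\row_i coord X i (c - c'))) != 0%R]| <= t)%N.
  rewrite -hcw; rewrite ltnS in hlt; apply: leq_trans hlt; apply: subset_leq_card.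
  by apply/subsetP => j; rewrite !inE linearB /= subr_eq0.
move/supp => h; move: hcw; rewrite h.
have -> : cw Rc 0 = 0 by apply/matrixP => j p; rewrite !mxE big1 // => i _; rewrite mxE mulr0.
by move/eqP; rewrite subr_eq0 (negbTE hne).
Qed.

Definition RcC (F : fieldType) (k b : nat) (C : {vspace 'M[F]_(k, b)}) (l : nat)
  : 'I_k -> 'M[F]_(b, l) := fun j => \matrix_(p, i) (vbasis C)`_i j p.

Lemma lift_ex (F : fieldType) (k b l t : nat) (C : {vspace 'M[F]_(k, b)}) :
  (l <= \dim C)%N -> code_dist_ge C t.+1 ->
  forall T : {set 'I_k}, (#|T| <= t)%N -> forall z : 'rV[F]_l,
  exists w : 'M[F]_(k, b), [forall j in T, row j w == 0] &&
                           (\sum_j row j w *m RcC C l j == z).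
Proof.
move=> hlC hd T hT z.
pose mask (M : 'M[F]_(k, b)) : 'M[F]_(k, b) := \matrix_(j, p) if j \in T then 0 else M j p.
pose P : 'M[F]_(l, k * b) := \matrix_(i, q) mxvec (mask (vbasis C)`_i) 0 q.
have fP : row_free P.
  apply: inj_row_free => v hv.
  pose c := \sum_(i < l) v 0 i *: (vbasis C)`_i.
  have cC : c \in C.
    apply: memv_suml => i _; apply: memvZ; apply: vbasis_mem; apply: mem_nth.
    rewrite size_tuple; exact: leq_trans (ltn_ord i) hlC.
  have hcT : forall j, j \notin T -> row j c = 0.
    move=> j hj; apply/rowP => p; rewrite !mxE summxE.
    have := congr1 (fun M : 'rV_(k * b) => M 0 (mxvec_index j p)) hv.
    rewrite !mxE => h; rewrite -[RHS]h; apply: eq_bigr => i _.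
    by rewrite !mxE mxvecE mxE (negbTE hj).
  have c0 : c = 0.
    apply/eqP; apply/negPn/negP => hc; have := hd c 0 cC (mem0v C) hc.
    rewrite ltnNge => /negP; apply; apply: leq_trans hT; apply: subset_leq_card.
    apply/subsetP => j; rewrite inE row0; apply: contraR => hj; by rewrite hcT.
  have vb := basis_free (vbasisP C).
  pose kk (i : 'I_(\dim C)) := match (insub (val i) : option 'I_l) with Some i' => v 0 i' | None => 0 end.
  have hs : \sum_(i < \dim C) kk i *: (vbasis C)`_i = 0.
    apply: etrans c0; rewrite /c.
    pose G (n : nat) := (match (insub n : option 'I_l) with Some i' => v 0 i' | None => 0 end) *: (vbasis C)`_n.
    transitivity (\sum_(i < l) G i); last first.
      rewrite /G; apply: eq_bigr => i _; by rewrite valK.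
    rewrite [RHS](big_ord_widen _ G hlC) [RHS]big_mkcond; apply: eq_bigr => i _.
    case: ifP => h; first by [].
    by rewrite /kk /G insubF // scale0r.
  apply/rowP => i0; rewrite mxE.
  move/freeP: vb => vb; have := vb kk hs (widen_ord hlC i0).
  by rewrite /kk /= valK.
have fullPT : row_full P^T by rewrite /row_full mxrank_tr.
have := submx_full z fullPT; case/submxP => D hD.
exists (mask (vec_mx D)); apply/andP; split.
  apply/forallP => j; apply/implyP => hj; apply/eqP/rowP => p; by rewrite !mxE hj.
apply/eqP/rowP => i; rewrite hD !mxE summxE.
rewrite (reindex _ (@curry_mxvec_bij k b)) /=.
rewrite [RHS](eq_bigr (fun jp : 'I_k * 'I_b => D 0 (mxvec_index jp.1 jp.2) * P^T (mxvec_index jp.1 jp.2) i)); last by case.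
rewrite -(pair_bigA _ (fun j p => D 0 (mxvec_index j p) * P^T (mxvec_index j p) i)) /=.
apply: eq_bigr => j _; rewrite !mxE; apply: eq_bigr => p _.
rewrite !mxE mxvecE !mxE.
by case: (j \in T); rewrite ?mul0r ?mulr0.
Qed.

Section CNF.
Variables (F : fieldType) (k t : nat).

Definition cnfB (T : tsub k t) (m : 'I_#|{: tsub k t}|) : F :=
  if [pick T' : tsub k t] == Some T
  then (if [pick T' : tsub k t] == Some (enum_val m) then 0 else -1)
  else ((enum_val m == T)%:R).

Definition cnfv (x : F) (r : 'rV[F]_#|{: tsub k t}|) (T : tsub k t) : F :=
  x * (if [pick T' : tsub k t] == Some T then 1 else 0) + \sum_m r 0 m * cnfB T m.

Lemma share_cnf j x r i : share (cnf_share F k t) j x r 0 i = cnfv x r (enum_val i).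
Proof. by rewrite /share /cnfv !mxE; congr (_ + _); apply: eq_bigr => m _; rewrite !mxE. Qed.

Lemma cnf_sum (T0 : tsub k t) x r : [pick T' : tsub k t] = Some T0 ->
  \sum_T cnfv x r T = x.
Proof.
move=> hp; rewrite /cnfv big_split /=.
rewrite (bigD1 T0) //= big1 => [|T hT]; last first.
  by rewrite hp (inj_eq (@Some_inj _)) eq_sym (negbTE hT) mulr0.
rewrite hp eqxx mulr1 addr0 exchange_big /= big1 ?addr0 // => m _.
rewrite -mulr_sumr; suff -> : \sum_T cnfB T m = 0 by rewrite mulr0.
have hB : forall T, T != T0 -> cnfB T m = (enum_val m == T)%:R.
  by move=> T hT; rewrite /cnfB hp (inj_eq (@Some_inj _)) eq_sym (negbTE hT).
rewrite (bigD1 T0) //=.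
case: (eqVneq (enum_val m) T0) => [he|hne].
  rewrite big1 => [|T hT]; last by rewrite hB // he eq_sym (negbTE hT).
  by rewrite /cnfB hp he eqxx addr0.
have h0 : cnfB T0 m = -1.
  by rewrite /cnfB hp eqxx (inj_eq (@Some_inj _)) eq_sym (negbTE hne).
rewrite h0 (bigD1 (enum_val m)) /= ?hne // big1 => [|T /andP [hT hT']]; last first.
  by rewrite hB // eq_sym (negbTE hT').
by rewrite hB // eqxx addr0 addNr.
Qed.

Lemma cnf_zero (Ts : tsub k t) (D : F) j (hj : j \in val Ts) :
  share (cnf_share F k t) j D (\row_m (if m == enum_rank Ts then D else 0)) = 0.
Proof.
apply/rowP => i; rewrite share_cnf !mxE /cnfv.
have hi : enum_val i != Ts.
  apply/eqP => he; have := enum_valP i; rewrite he inE hj //.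
rewrite (bigD1 (enum_rank Ts)) //= big1 => [|m hm]; last by rewrite !mxE (negbTE hm) mul0r.
rewrite !mxE eqxx addr0 /cnfB enum_rankK.
case: eqP => [hp|hp].
  rewrite mulr1; case: eqP => [hp'|_]; first by move: hi; rewrite -(@Some_inj _ _ _ (etrans (esym hp) hp')) eqxx.
  by rewrite mulrN1 subrr.
by rewrite mulr0 add0r eq_sym (negbTE hi) mulr0.
Qed.
End CNF.

Lemma exists_sup (k : nat) (T : {set 'I_k}) (n : nat) :
  (#|T| <= n)%N -> (n <= k)%N -> exists T' : {set 'I_k}, T \subset T' /\ #|T'| = n.
Proof.
elim: n => [|n IH] h1 h2.
  by exists T; split => //; apply/eqP; rewrite -leqn0.
case: (ltngtP #|T| n.+1) => [hlt|hgt|heq]; last by exists T.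
  2: by rewrite ltnNge h1 in hgt.
have [T' [hs hc]] := IH hlt (ltnW h2).
have : (0 < #|~: T'|)%N by rewrite cardsCs setCK card_ord hc subn_gt0.
case/card_gt0P => y hy.
exists (y |: T'); split; first by apply: subset_trans hs (subsetUr _ _).
by rewrite cardsU1 -in_setC hy hc add1n.
Qed.

Lemma share_lin (F : fieldType) k (S : linShare F k) j x x' r d :
  share S j x' r = share S j x (r - d) + share S j (x' - x) d.
Proof.
rewrite /share mulmxBl scalerBl addrACA [x *: _ + _]addrC !subrK //.
Qed.

Lemma cnf_private (F : finFieldType) (k t : nat) : (t <= k)%N -> t_private (cnf_share F k t) t.
Proof.
move=> htk T hT x x' v.
have [T' [hs hc]] := exists_sup hT htk.
pose Ts : tsub k t := exist _ T' (introT eqP hc).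
pose d : 'rV[F]_#|{: tsub k t}| := \row_m (if m == enum_rank Ts then x' - x else 0).
have -> : [set r | [forall j in T, share (cnf_share F k t) j x' r == v j]] =
          (fun r => r - d) @^-1: [set r | [forall j in T, share (cnf_share F k t) j x r == v j]].
  apply/setP => r; rewrite !inE; apply: eq_forallb => j.
  case hj: (j \in T) => //=.
  rewrite (@share_lin _ _ (cnf_share F k t) j x x' r d) cnf_zero ?addr0 //.
  by move/subsetP: hs => /(_ j hj).
by rewrite card_preimset // => r1 r2; apply: addIr.
Qed.

Lemma card_cnf_part (k t : nat) (j : 'I_k) : #|cnf_part t j| = 'C(k.-1, t).
Proof.
rewrite -(card_imset _ val_inj).
have -> : [set val T | T in cnf_part t j] = [set A : {set 'I_k} | A \subset [set~ j] & #|A| == t].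
  apply/setP => A; rewrite !inE; apply/imsetP/andP => [[T hT ->]|[h1 h2]].
    rewrite inE in hT; split; last exact: valP T.
    by apply/subsetP => i hi; rewrite !inE; apply: contraNneq hT => <-.
  exists (exist _ A h2) => //; rewrite inE /=.
  by apply/negP => hj; move/subsetP: h1 => /(_ j hj); rewrite !inE eqxx.
by rewrite cards_draws cardsC1 card_ord.
Qed.

Lemma upload_cnf (F : finFieldType) (k t l : nat) :
  upload_size (cnf_share F k t) l = (#|{: F}| ^ (k * l * 'C(k.-1, t)))%N.
Proof.
rewrite /upload_size.
rewrite (eq_bigr (fun _ => (#|F| ^ 'C(k.-1, t)) ^ k)%N) => [|i _].
  by rewrite prod_nat_const card_ord -!expnM mulnC.
rewrite (eq_bigr (fun _ => (#|F| ^ 'C(k.-1, t)))%N) => [|j _].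
  by rewrite prod_nat_const card_ord.
by rewrite card_mx /= card_cnf_part mul1n.
Qed.

Lemma cnf_hss (F : finFieldType) (l k t b : nat) (C : {vspace 'M[F]_(k, b)}) :
  (l <= \dim C)%N -> code_dist_ge C t.+1 -> (t <= k)%N ->
  exists (Ev : forall j : 'I_k, ('I_l -> 'rV[F]_(sh_s (cnf_share F k t) j)) -> 'rV[F]_b)
         (Rc : 'I_k -> 'M[F]_(b, l)),
     linHSS_concat t (cnf_share F k t) Ev Rc.
Proof.
move=> hlC hd htk.
have [T0 hp] : exists T0 : tsub k t, [pick T' : tsub k t] = Some T0.
  have h0 : (#|(set0 : {set 'I_k})| <= t)%N by rewrite cards0.
  have [T' [_ hc]] := exists_sup h0 htk.
  case: pickP => [T0 _|h]; first by exists T0.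
  by have := h (exist _ T' (introT eqP hc)).
have hT : forall T : tsub k t, (#|val T| <= t)%N by move=> T; rewrite (eqP (valP T)).
pose L (T : tsub k t) (z : 'rV[F]_l) := xchoose (lift_ex hlC hd (hT T) z).
have hL : forall (T : tsub k t) (z : 'rV[F]_l), [forall j in val T, row j (L T z) == 0] && (\sum_j row j (L T z) *m RcC C l j == z).
  by move=> T z; apply: (xchooseP (lift_ex hlC hd (hT T) z)).
exists (fun j (s : 'I_l -> 'rV[F]_(sh_s (cnf_share F k t) j)) =>
   \sum_(i' < #|cnf_part t j|) row j (L (enum_val i') (\row_i s i 0 i'))).
exists (RcC C l); split; first exact: cnf_private.
move=> x r.
pose X (T : tsub k t) := \row_i cnfv (x i) (r i) T.
have hEv : forall j, \sum_(i' < #|cnf_part t j|)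
    row j (L (enum_val i') (\row_i share (cnf_share F k t) j (x i) (r i) 0 i'))
    = \sum_T row j (L T (X T)).
  move=> j.
  transitivity (\sum_(i' < #|cnf_part t j|) row j (L (enum_val i') (X (enum_val i')))).
    apply: eq_bigr => i' _; congr (row j (L _ _)); apply/rowP => i; by rewrite [LHS]mxE share_cnf [RHS]mxE.
  rewrite -(big_enum_val (fun T => row j (L T (X T)))).
  rewrite big_mkcond; apply: eq_bigr => T _.
  case: ifP => // hTj; rewrite inE in hTj; move/negbFE: hTj => hTj.
  by apply/esym; have := hL T (X T); case/andP => /forallP /(_ j) /implyP /(_ hTj) /eqP.
rewrite (eq_bigr (fun j => (\sum_T row j (L T (X T))) *m RcC C l j)) => [|j _]; last first.
  by rewrite hEv.
rewrite (eq_bigr (fun j => \sum_T row j (L T (X T)) *m RcC C l j)) => [|j _]; last first.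
  by rewrite mulmx_suml.
rewrite exchange_big /=.
rewrite (eq_bigr (fun T => X T)) => [|T _]; last first.
  by have := hL T (X T); case/andP => _ /eqP.
apply/rowP => i; rewrite summxE !mxE.
rewrite (eq_bigr (fun T => cnfv (x i) (r i) T)) => [|T _]; last by rewrite mxE.

exact: cnf_sum hp.
Qed.

Lemma code_facts (F : finFieldType) (l k t b : nat) (C : {vspace 'M[F]_(k, b)}) :
  (0 < l)%N -> (0 < k)%N -> (l%:R / k%:R < b%:R :> rat) ->
  l%:R / (k * b)%:R <= code_rate C -> code_dist_ge C t.+1 ->
  (l <= \dim C)%N /\ (t <= k)%N.
Proof.
move=> hl hk hb hr hd.
have hb0 : (0 < b)%N.
  rewrite lt0n; apply/negP => /eqP hb0; move: hb; rewrite hb0 ltNge.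
  by rewrite divr_ge0 ?ler0n.
have hkb : (0 < k * b)%N.
  by rewrite muln_gt0 hb0 hk.
have hlC : (l <= \dim C)%N.
  have hbk : (0 < b * k)%N by rewrite mulnC.
  move: hr; rewrite /code_rate [(k * b)%N]mulnC ler_pM2r ?invr_gt0 ?ltr0n ?(ler_nat rat) //.
split => //.
have hC : C != 0%VS by rewrite -dimv_eq0 -lt0n; exact: leq_trans hl hlC.
have hv : vpick C != 0 by rewrite vpick0.
have := hd _ _ (memv_pick C) (mem0v C) hv => h.
apply: ltnW; apply: leq_trans h _; rewrite -[X in (_ <= X)%N]card_ord; exact: max_card.
Qed.

Theorem mainTheorem3 (F : finFieldType) (l k t b : nat)
  (hl : (0 < l)%N) (hk : (0 < k)%N) (ht : (0 < t)%N)
  (hb : (l%:R / k%:R < b%:R :> rat)) :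
  ((exists (S : linShare F k)
           (Ev : forall j : 'I_k, ('I_l -> 'rV[F]_(sh_s S j)) -> 'rV[F]_b)
           (Rc : 'I_k -> 'M[F]_(b, l)),
       linHSS_concat t S Ev Rc)
   <->
   (exists C : {vspace 'M[F]_(k, b)},
       l%:R / (k * b)%:R <= code_rate C /\ code_dist_ge C t.+1))
  /\
  ((exists C : {vspace 'M[F]_(k, b)},
       l%:R / (k * b)%:R <= code_rate C /\ code_dist_ge C t.+1) ->
   exists (Ev : forall j : 'I_k, ('I_l -> 'rV[F]_(sh_s (cnf_share F k t) j)) -> 'rV[F]_b)
          (Rc : 'I_k -> 'M[F]_(b, l)),
     linHSS_concat t (cnf_share F k t) Ev Rc /\
     upload_size (cnf_share F k t) l = (#|{: F}| ^ (k * l * 'C(k.-1, t)))%N).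
Proof.
have P2 : (exists C : {vspace 'M[F]_(k, b)},
       l%:R / (k * b)%:R <= code_rate C /\ code_dist_ge C t.+1) ->
   exists (Ev : forall j : 'I_k, ('I_l -> 'rV[F]_(sh_s (cnf_share F k t) j)) -> 'rV[F]_b)
          (Rc : 'I_k -> 'M[F]_(b, l)),
     linHSS_concat t (cnf_share F k t) Ev Rc /\
     upload_size (cnf_share F k t) l = (#|{: F}| ^ (k * l * 'C(k.-1, t)))%N.
  move=> [C [hr hd]].
  have [hlC htk] := code_facts hl hk hb hr hd.
  have [Ev [Rc H]] := cnf_hss hlC hd htk.
  by exists Ev, Rc; split => //; exact: upload_cnf.
split => //; split.
  by move=> [S [Ev [Rc H]]]; exact: hss_code H.
move/P2 => [Ev [Rc [H _]]]; by exists (cnf_share F k t), Ev, Rc.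
Qed.
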